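(* Let $a<b$ be real numbers and define a sequence $(x_n)_{n\in\mathbb{N}}$ by, for $k\in\mathbb{N}$: $x_{4k-3}=a-2^{-k}$, $x_{4k-2}=b+2^{-k}$, $x_{4k-1}=a-3^{-k}$, $x_{4k}=b+3^{-k}$. Let $X=\{a,b\}\cup\{x_n:n\in\mathbb{N}\}\subset\mathbb{R}$ with the Euclidean metric, and define $T\colon X\to X$ by $T(x_n)=x_{n+1}$ for $n\geqslant1$, $T(a)=b$, $T(b)=a$. Then $T$ is continuous, $T$ is a graphic contraction of order $4$ (the defining inequality holds with any $\alpha\in[\tfrac12,1)$), $T$ is not a graphic contraction of order $1$, $2$ or $3$, and $a,b$ are periodic points of $T$ of prime period $2$.
   Context: Let $(X,d)$ be a nonempty metric space and $n\in\mathbb{N}$. A mapping $T\colon X\to X$ is a graphic contraction of order $n$ if there exists $\alpha\in(0,1)$ such that $d(T^n x,T^{2n}x)\leqslant \alpha\, d(x,T^n x)$ for all $x\in X$, where $T^k$ denotes the $k$-th iterate of $T$. A point $x$ is a periodic point of period $m$ if $T^m x=x$; the least such positive $m$ is its prime period. *)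

(* Defs.v *)
From HB Require Import structures.
From mathcomp Require Import all_boot all_order all_algebra.
From mathcomp Require Import all_classical all_reals all_analysis.
Set Implicit Arguments. Unset Strict Implicit. Unset Printing Implicit Defensive.
Import Order.TTheory GRing.Theory Num.Theory.
Import numFieldNormedType.Exports.
Local Open Scope classical_set_scope.
Local Open Scope ring_scope.

(* The sequence x_n, n >= 1 (x_0 is unused; set to a):
   x_{4k-3} = a - 2^-k, x_{4k-2} = b + 2^-k,
   x_{4k-1} = a - 3^-k, x_{4k}   = b + 3^-k   (k >= 1). *)
Definition xseq (R : realType) (a b : R) (n : nat) : R :=
  if n == 0%N then a else
  let k := ((n + 3) %/ 4)%N in
  match ((n + 3) %% 4)%N with
  | 0%N => a - (2 ^+ k)^-1
  | 1%N => b + (2 ^+ k)^-1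
  | 2%N => a - (3 ^+ k)^-1
  | _ => b + (3 ^+ k)^-1
  end.

Definition Xset (R : realType) (a b : R) : set R :=
  [set y | y = a \/ y = b \/ exists n : nat, (0 < n)%N /\ y = xseq a b n].

Definition graphic_contraction_ineq (R : realType) (X : set R) (T : R -> R)
    (n : nat) (alpha : R) : Prop :=
  forall x, X x -> `|iter n T x - iter (2 * n) T x| <= alpha * `|x - iter n T x|.

Definition graphic_contraction (R : realType) (X : set R) (T : R -> R)
    (n : nat) : Prop :=
  exists alpha : R, 0 < alpha < 1 /\ graphic_contraction_ineq X T n alpha.

Definition prime_period (R : realType) (T : R -> R) (x : R) (m : nat) : Prop :=
  (0 < m)%N /\ iter m T x = x /\ forall k, (0 < k < m)%N -> iter k T x <> x.

(* Main.v *)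
Require Import Defs.
From HB Require Import structures.
From mathcomp Require Import all_boot all_order all_algebra.
From mathcomp Require Import all_classical all_reals all_analysis.
From mathcomp Require Import zify.
From mathcomp Require Import ring lra.
Import Order.TTheory GRing.Theory Num.Theory.
Import numFieldNormedType.Exports.
Local Open Scope classical_set_scope.
Local Open Scope ring_scope.
Lemma xs1 (R : realType) (a b : R) k : xseq a b (4*k+1) = a - (2^+k.+1)^-1.
Proof.
rewrite /xseq; have -> : (4*k+1 == 0)%N = false by lia.
have -> : ((4*k+1+3) %/ 4 = k.+1)%N by lia.
by have -> : ((4*k+1+3) %% 4 = 0)%N by lia.
Qed.
Lemma xs2 (R : realType) (a b : R) k : xseq a b (4*k+2) = b + (2^+k.+1)^-1.
Proof.
rewrite /xseq; have -> : (4*k+2 == 0)%N = false by lia.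
have -> : ((4*k+2+3) %/ 4 = k.+1)%N by lia.
by have -> : ((4*k+2+3) %% 4 = 1)%N by lia.
Qed.
Lemma xs3 (R : realType) (a b : R) k : xseq a b (4*k+3) = a - (3^+k.+1)^-1.
Proof.
rewrite /xseq; have -> : (4*k+3 == 0)%N = false by lia.
have -> : ((4*k+3+3) %/ 4 = k.+1)%N by lia.
by have -> : ((4*k+3+3) %% 4 = 2)%N by lia.
Qed.
Lemma xs4 (R : realType) (a b : R) k : xseq a b (4*k+4) = b + (3^+k.+1)^-1.
Proof.
rewrite /xseq; have -> : (4*k+4 == 0)%N = false by lia.
have -> : ((4*k+4+3) %/ 4 = k.+1)%N by lia.
by have -> : ((4*k+4+3) %% 4 = 3)%N by lia.
Qed.

Lemma ncls n : (0 < n)%N -> exists k,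
  n = 4*k+1 \/ n = 4*k+2 \/ n = 4*k+3 \/ n = 4*k+4.
Proof.
move=> n0; exists ((n - 1) %/ 4)%N.
have : ((n-1) %% 4 < 4)%N by rewrite ltn_mod.
have := divn_eq (n-1) 4.
case: ((n-1) %% 4)%N => [|[|[|[|r]]]] e _ //; lia.
Qed.

Lemma iterx (R : realType) (a b : R) (T : R -> R) :
  (forall n : nat, (0 < n)%N -> T (xseq a b n) = xseq a b n.+1) ->
  forall n m, (0 < n)%N -> iter m T (xseq a b n) = xseq a b (n + m).
Proof.
move=> hT n m n0; elim: m => [|m IH]; first by rewrite addn0.
by rewrite iterS IH hT ?addnS //; lia.
Qed.

Lemma pmono (R : realType) (c : R) m n : 1 <= c -> (m <= n)%N -> (c^+n)^-1 <= (c^+m)^-1.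
Proof.
move=> c1 mn; have c0 : 0 < c by apply: lt_le_trans c1.
rewrite lef_pV2 ?posrE ?exprn_gt0 //; exact: ler_weXn2l.
Qed.

Lemma p32 (R : realType) n : ((3:R)^+n)^-1 <= (2^+n)^-1.
Proof.
rewrite lef_pV2 ?posrE ?exprn_gt0 //; apply: lerXn2r; by rewrite ?nnegrE // ler_nat.
Qed.

Lemma ppos (R : realType) (c : R) n : 0 < c -> 0 < (c^+n)^-1.
Proof. by move=> c0; rewrite invr_gt0 exprn_gt0. Qed.

Lemma pnat (R : realType) (c n : nat) : ((c%:R : R)^+n)^-1 = ((c ^ n)%N%:R)^-1.
Proof. by rewrite natrX. Qed.
Lemma Xcls (R : realType) (a b : R) (T : R -> R) :
  a < b ->
  (forall n : nat, (0 < n)%N -> T (xseq a b n) = xseq a b n.+1) ->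
  T a = b -> T b = a -> forall z, Xset a b z ->
  (z <= a /\ T z = a + b - z) \/ z = b \/
  (exists k, z = b + (2^+k.+1)^-1 /\ T z = a - (3^+k.+1)^-1) \/
  (exists k, z = b + (3^+k.+1)^-1 /\ T z = a - (2^+k.+2)^-1).
Proof.
move=> hab hT hTa hTb z [->|[->|[n [n0 ->]]]].
- by left; split; [|rewrite hTa]; lra.
- by right; left.
have [k [->|[->|[->|->]]]] := ncls _ n0.
- left; rewrite hT ?addn_gt0 ?orbT // -addnS xs1 xs2.
  have := @ppos R 2 k.+1 (ltr0Sn R 1); split; lra.
- right; right; left; exists k; rewrite hT ?addn_gt0 ?orbT // -addnS xs2.
  by rewrite (_ : (4 * k + 3 = 4 * k + 3)%N) // xs3.
- left; rewrite hT ?addn_gt0 ?orbT // -addnS xs3 xs4.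
  have := @ppos R 3 k.+1 (ltr0Sn R 2); split; lra.
- right; right; right; exists k; rewrite hT ?addn_gt0 ?orbT // -addnS xs4.
  by rewrite (_ : (4 * k + 5 = 4 * k.+1 + 1)%N) ?xs1 //; lia.
Qed.
Arguments Xcls {R a b T} _ _ _ _ {z}.

Lemma Xsplit (R : realType) (a b : R) (T : R -> R) :
  a < b ->
  (forall n : nat, (0 < n)%N -> T (xseq a b n) = xseq a b n.+1) ->
  T a = b -> T b = a -> forall z, Xset a b z -> z <= a \/ b <= z.
Proof.
move=> hab hT hTa hTb z Xz.
case: (Xcls hab hT hTa hTb Xz) => [[]|[->|[[k [-> _]]|[k [-> _]]]]]; [by left|right..].
- by [].
- by have := @ppos R 2 k.+1 (ltr0Sn R 1); lra.
- by have := @ppos R 3 k.+1 (ltr0Sn R 2); lra.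
Qed.
Arguments Xsplit {R a b T} _ _ _ _ {z}.

Lemma gapnat (R : realType) (P Q : nat) : (0 < P)%N -> (0 < Q)%N -> P <> Q ->
  (2 * P%:R^+2)^-1 <= `|P%:R^-1 - Q%:R^-1 : R|.
Proof.
move=> P0 Q0 PQ.
have p1 : (1 : R) <= P%:R by rewrite ler1n.
have q1 : (1 : R) <= Q%:R by rewrite ler1n.
have [hpq|hqp] : (P < Q)%N \/ (Q < P)%N by lia.
- have h : (P%:R : R) + 1 <= Q%:R by rewrite natr1 ler_nat.
  have E : P%:R^-1 - Q%:R^-1 - (2 * P%:R^+2)^-1 =
     (2 * P%:R * Q%:R - 2 * P%:R^+2 - Q%:R) / (2 * P%:R^+2 * Q%:R) :> R.
    by field; apply/andP; split; rewrite pnatr_eq0 -lt0n.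
  have : 0 <= (2 * P%:R * Q%:R - 2 * P%:R^+2 - Q%:R) / (2 * P%:R^+2 * Q%:R) :> R.
    apply: divr_ge0; last by apply: mulr_ge0; [apply: mulr_ge0|]; rewrite ?exprn_ge0 //; lra.
    nra.
  rewrite -E => h2; apply: le_trans (ler_norm _); lra.
- have h : (Q%:R : R) + 1 <= P%:R by rewrite natr1 ler_nat.
  have E : Q%:R^-1 - P%:R^-1 - (2 * P%:R^+2)^-1 =
     (2 * P%:R^+2 - 2 * P%:R * Q%:R - Q%:R) / (2 * P%:R^+2 * Q%:R) :> R.
    by field; apply/andP; split; rewrite pnatr_eq0 -lt0n.
  have : 0 <= (2 * P%:R^+2 - 2 * P%:R * Q%:R - Q%:R) / (2 * P%:R^+2 * Q%:R) :> R.
    apply: divr_ge0; last by apply: mulr_ge0; [apply: mulr_ge0|]; rewrite ?exprn_ge0 //; lra.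
    nra.
  rewrite -E => h2; rewrite distrC; apply: le_trans (ler_norm _); lra.
Qed.

Lemma smallK (R : realType) (e : R) : 0 < e -> exists K, ((2:R)^+K.+1)^-1 < e.
Proof.
move=> e0; exists (Num.truncn (e^-1)).
set K := Num.truncn _.
have h1 := truncnS_gt (e^-1).
have h2 : (K.+1%:R : R) <= 2^+K.+1.
  by rewrite -natrX ler_nat ltnW // ltn_expl.
rewrite invf_plt ?posrE ?exprn_gt0 //; apply: lt_le_trans h1 _; exact: h2.
Qed.
Lemma Liso (R : realType) (a b : R) (T : R -> R) :
  a < b ->
  (forall n : nat, (0 < n)%N -> T (xseq a b n) = xseq a b n.+1) ->
  T a = b -> T b = a -> forall (P : nat) z, (0 < P)%N -> Xset a b z ->
  `|b + P%:R^-1 - z| < Num.min (b - a) ((2 * P%:R^+2)^-1) -> z = b + P%:R^-1.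
Proof.
move=> hab hT hTa hTb P z P0 Xz; rewrite lt_min => /andP[h1 h2].
have p1 : (1 : R) <= P%:R by rewrite ler1n.
have pp : 0 < (P%:R : R)^-1 by rewrite invr_gt0; lra.
have gen : forall Q : nat, (0 < Q)%N -> z = b + Q%:R^-1 -> z = b + P%:R^-1.
  move=> Q Q0 ez; rewrite ez in h2 *; have [->//|/eqP PQ] := eqVneq P Q.
  have := @gapnat R Q P Q0 P0 (fun e => PQ (esym e)).
  have := @gapnat R P Q P0 Q0 PQ.
  move: h2; rewrite (_ : b + P%:R^-1 - (b + Q%:R^-1) = P%:R^-1 - Q%:R^-1); last by ring.
  lra.
move: h1 h2 gen; case: (Xcls hab hT hTa hTb Xz) => [[zl _]|[->|[[k [-> _]]|[k [-> _]]]]] h1 h2 gen.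
- exfalso; move: h1; rewrite ger0_norm; lra.
- exfalso; move: h2; rewrite (_ : b + P%:R^-1 - b = P%:R^-1); last by ring.
  rewrite gtr0_norm //.
  have E : P%:R^-1 - (2 * P%:R^+2)^-1 = (2 * P%:R - 1) / (2 * P%:R^+2) :> R.
    by field; rewrite pnatr_eq0 -lt0n.
  have : 0 <= (2 * P%:R - 1) / (2 * P%:R^+2) :> R.
    by apply: divr_ge0; [lra| apply: mulr_ge0; rewrite ?exprn_ge0 //; lra].
  lra.
- by apply: (gen (2 ^ k.+1)%N); rewrite ?expn_gt0 // natrX.
- by apply: (gen (3 ^ k.+1)%N); rewrite ?expn_gt0 // natrX.
Qed.
Arguments Liso {R a b T} _ _ _ _ P {z}.
Lemma within_cont_eps (R:realType) (A : set R) (f : R -> R) :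
 (forall x, A x -> forall e, 0<e -> exists2 d, 0<d & forall y, A y -> `|x - y| < d -> `|f x - f y| < e) -> {within A, continuous f}.
Proof.
move=> H; apply/subspace_continuousP => x Ax; apply/cvgrPdist_lt => e e0.
have [d d0 Hd] := H x Ax e e0.
rewrite near_withinE; exists d => //= y xy Ay; exact: Hd.
Qed.

Lemma Lleft (R : realType) (a b : R) (T : R -> R) :
  a < b ->
  (forall n : nat, (0 < n)%N -> T (xseq a b n) = xseq a b n.+1) ->
  T a = b -> T b = a -> forall z, Xset a b z -> z <= a -> T z = a + b - z.
Proof.
move=> hab hT hTa hTb z Xz za.
case: (Xcls hab hT hTa hTb Xz) => [[_ //]|[ez|[[k [ez _]]|[k [ez _]]]]]; exfalso; move: za; rewrite ez.
- lra.
- by have := @ppos R 2 k.+1 (ltr0Sn R 1); lra.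
- by have := @ppos R 3 k.+1 (ltr0Sn R 2); lra.
Qed.
Arguments Lleft {R a b T} _ _ _ _ {z}.

Lemma id1 (R : comRingType) (u d t : R) : u - d*t - (u - d*(d*t)) = -(d*t*(1-d)).
Proof. by ring. Qed.
Lemma id2 (R : comRingType) (u d t : R) : u - t - (u - d*t) = -(t*(1-d)).
Proof. by ring. Qed.
Lemma id3 (R : comRingType) (u x y : R) : u - x - (u - y) = -(u + x - (u + y)).
Proof. by ring. Qed.

Lemma ineqm (R : realType) (u c al : R) k : 2 <= c -> 1/2 <= al ->
  `|u - (c^+k.+2)^-1 - (u - (c^+k.+3)^-1)| <= al * `|u - (c^+k.+1)^-1 - (u - (c^+k.+2)^-1)|.
Proof.
move=> c2 al2; rewrite [c^+k.+3]exprS [c^+k.+2]exprS !invfM.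
have c0 : 0 < c by lra.
set t := (c^+k.+1)^-1. set d := c^-1.
have t0 : 0 < t by rewrite /t invr_gt0 exprn_gt0.
have d0 : 0 < d by rewrite /d invr_gt0.
have d2 : d <= 1/2 by rewrite /d mul1r lef_pV2 ?posrE.
clearbody t d.
rewrite id1 id2 !normrN.
have g1 : 0 <= d * t * (1 - d) by apply: mulr_ge0; [apply: mulr_ge0|]; lra.
have g2 : 0 <= t * (1 - d) by apply: mulr_ge0; lra.
rewrite (ger0_norm g1) (ger0_norm g2).
have : 0 <= t * (1 - d) * (al - d) by apply: mulr_ge0; [apply: mulr_ge0|]; lra.
nra.
Qed.

Lemma ineqp (R : realType) (u c al : R) k : 2 <= c -> 1/2 <= al ->
  `|u + (c^+k.+2)^-1 - (u + (c^+k.+3)^-1)| <= al * `|u + (c^+k.+1)^-1 - (u + (c^+k.+2)^-1)|.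
Proof.
move=> c2 al2; have := @ineqm R u c al k c2 al2.
rewrite !id3.
by rewrite !normrN.
Qed.
Theorem mainTheorem3 (R : realType) (a b : R) (T : R -> R) :
  a < b ->
  (forall n : nat, (0 < n)%N -> T (xseq a b n) = xseq a b n.+1) ->
  T a = b -> T b = a ->
  [/\ {within Xset a b, continuous T},
      graphic_contraction (Xset a b) T 4,
      (forall alpha : R, 1 / 2 <= alpha < 1 ->
         graphic_contraction_ineq (Xset a b) T 4 alpha),
      (forall n : nat, (n \in [:: 1; 2; 3]%N) ->
         ~ graphic_contraction (Xset a b) T n)
    & prime_period T a 2 /\ prime_period T b 2].
Proof.
move=> hab hT hTa hTb.
have ab0 : 0 < b - a by lra.
have gc4 : forall alpha : R, 1 / 2 <= alpha < 1 ->
         graphic_contraction_ineq (Xset a b) T 4 alpha.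
  move=> al /andP[al2 _] x [->|[->|[n [n0 ->]]]].
  - rewrite (_ : (2 * 4 = 8)%N) //=; do 8 rewrite ?hTa ?hTb.
    by rewrite subrr normr0 mulr0.
  - rewrite (_ : (2 * 4 = 8)%N) //=; do 8 rewrite ?hTa ?hTb.
    by rewrite subrr normr0 mulr0.
  rewrite !iterx //.
  have c2 : (2:R) <= 2 by [].
  have c3 : (2:R) <= 3 by rewrite ler_nat.
  have [k [->|[->|[->|->]]]] := ncls _ n0.
  - rewrite (_ : (4*k+1+4 = 4*k.+1+1)%N); last lia.
    rewrite (_ : (4*k+1+2*4 = 4*k.+2+1)%N); last lia.
    by rewrite !xs1; apply: ineqm.
  - rewrite (_ : (4*k+2+4 = 4*k.+1+2)%N); last lia.
    rewrite (_ : (4*k+2+2*4 = 4*k.+2+2)%N); last lia.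
    by rewrite !xs2; apply: ineqp.
  - rewrite (_ : (4*k+3+4 = 4*k.+1+3)%N); last lia.
    rewrite (_ : (4*k+3+2*4 = 4*k.+2+3)%N); last lia.
    by rewrite !xs3; apply: ineqm.
  - rewrite (_ : (4*k+4+4 = 4*k.+1+4)%N); last lia.
    rewrite (_ : (4*k+4+2*4 = 4*k.+2+4)%N); last lia.
    by rewrite !xs4; apply: ineqp.
split.
- apply: within_cont_eps => y Xy e e0.
  case: (Xsplit hab hT hTa hTb Xy) => [yl|yr].
  + exists (Num.min e (b - a)); first by rewrite lt_min e0 ab0.
    move=> z Xz; rewrite lt_min => /andP[h1 h2].
    case: (Xsplit hab hT hTa hTb Xz) => [zl|zr].
    * rewrite (Lleft hab hT hTa hTb Xy yl) (Lleft hab hT hTa hTb Xz zl).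
      by rewrite (_ : a + b - y - (a + b - z) = - (y - z)) ?normrN //; lra.
    * exfalso; move: h2; rewrite distrC ger0_norm; lra.
  + case: (Xcls hab hT hTa hTb Xy) => [[yl _]|[->|[[k [-> _]]|[k [-> _]]]]].
    * exfalso; lra.
    * have [K hK] := @smallK R e e0.
      have pK := @ppos R 3 K.+1 (ltr0Sn R 2).
      exists (Num.min (b - a) (3^+K.+1)^-1); first by rewrite lt_min ab0 pK.
      move=> z Xz; rewrite lt_min => /andP[h1 h2]; rewrite hTb.
      move: h1 h2; case: (Xcls hab hT hTa hTb Xz) => [[zl _]|[->|[[j [-> ->]]|[j [-> ->]]]]] h1 h2.
      -- exfalso; move: h1; rewrite ger0_norm; lra.
      -- by rewrite hTb subrr normr0.
      -- move: h2; rewrite (_ : b - (b + (2 ^+ j.+1)^-1) = - (2 ^+ j.+1)^-1); last lra.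
         rewrite (_ : a - (a - (3 ^+ j.+1)^-1) = (3 ^+ j.+1)^-1); last lra.
         have := @ppos R 3 j.+1 (ltr0Sn R 2); have := @ppos R 2 j.+1 (ltr0Sn R 1).
         move=> p2 p3; rewrite normrN !gtr0_norm // => h2.
         have := p32 R j.+1; have := p32 R K.+1; lra.
      -- move: h2; rewrite (_ : b - (b + (3 ^+ j.+1)^-1) = - (3 ^+ j.+1)^-1); last lra.
         rewrite (_ : a - (a - (2 ^+ j.+2)^-1) = (2 ^+ j.+2)^-1); last lra.
         have := @ppos R 3 j.+1 (ltr0Sn R 2); have := @ppos R 2 j.+2 (ltr0Sn R 1).
         move=> p2 p3; rewrite normrN !gtr0_norm // => h2.
         have Kj : (K <= j)%N.
           rewrite leqNgt; apply/negP => jK.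
           have := @pmono R 3 j.+1 K.+1 (ler1n R 3) (ltnW jK); lra.
         have := @pmono R 2 K.+1 j.+2 (ler1n R 2) (leq_trans Kj (leqnSn _)); lra.
    * have -> : b + (2 ^+ k.+1)^-1 = b + ((2 ^ k.+1)%N%:R)^-1 by rewrite natrX.
      have P0 : (0 < 2 ^ k.+1)%N by rewrite expn_gt0.
      exists (Num.min (b - a) ((2 * ((2 ^ k.+1)%N%:R)^+2)^-1)).
        by rewrite lt_min ab0 invr_gt0 mulr_gt0 // exprn_gt0 // ltr0n.
      by move=> z Xz hz; rewrite -(Liso hab hT hTa hTb _ P0 Xz hz) subrr normr0.
    * have -> : b + (3 ^+ k.+1)^-1 = b + ((3 ^ k.+1)%N%:R)^-1 by rewrite natrX.
      have P0 : (0 < 3 ^ k.+1)%N by rewrite expn_gt0.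
      exists (Num.min (b - a) ((2 * ((3 ^ k.+1)%N%:R)^+2)^-1)).
        by rewrite lt_min ab0 invr_gt0 mulr_gt0 // exprn_gt0 // ltr0n.
      by move=> z Xz hz; rewrite -(Liso hab hT hTa hTb _ P0 Xz hz) subrr normr0.
- exists (1/2); split; first by apply/andP; split; lra.
  by apply: gc4; apply/andP; split; lra.
- exact: gc4.
- move=> n; rewrite !inE => /or3P[/eqP->|/eqP->|/eqP->] [al [/andP[al0 al1] H]].
  + have := H a (or_introl erefl); rewrite (_ : (2 * 1 = 2)%N) //= hTa hTb.
    rewrite [`|a - b|]distrC (gtr0_norm ab0) => h; nra.
  + have X3 : Xset a b (xseq a b (4*0+3)) by right; right; exists 3%N.
    have := H _ X3; rewrite !iterx //.
    rewrite (_ : (4*0+3+2 = 4*1+1)%N) // (_ : (4*0+3+2*2 = 4*1+3)%N) //.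
    rewrite xs1 !xs3.
    rewrite (_ : a - (2 ^+ 2)^-1 - (a - (3 ^+ 2)^-1) = - (5 / 36)); last first.
      by rewrite !expr2; field.
    rewrite (_ : a - (3 ^+ 1)^-1 - (a - (2 ^+ 2)^-1) = - (1 / 12)); last first.
      by rewrite !expr2 expr1; field.
    rewrite !normrN !ger0_norm //; lra.
  + have := H a (or_introl erefl); rewrite (_ : (2 * 3 = 6)%N) //=; do 6 rewrite ?hTa ?hTb.
    rewrite [`|a - b|]distrC (gtr0_norm ab0) => h; nra.
- split; (split; first by []); split.
  + by rewrite /= hTa hTb.
  + by move=> [|[|k]] //= _; rewrite hTa => e; move: hab; rewrite e ltxx.
  + by rewrite /= hTb hTa.
  + by move=> [|[|k]] //= _; rewrite hTb => e; move: hab; rewrite e ltxx.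
Qed.
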